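(* Let $\Lambda=(\mathcal{L}\subset\mathbb{R}^s,\mathbb{R}^n)$ be a generic cut-and-project scheme, where $\mathcal{L}$ has associated matrix $L\in\mathbb{R}^{s\times s}$. Let $W_A\in\mathbb{R}^{n\times n}$, $W_B\in\mathbb{R}^{(s-n)\times(s-n)}$ and $Q\in\mathbb{Q}^{s\times s}$ be non-singular matrices. Define $\widetilde L=\begin{pmatrix}W_A&O\\O&W_B\end{pmatrix}LQ^{-1}$ and $\widetilde{\mathcal{L}}=\{\widetilde L\mathbf{r}:\mathbf{r}\in\mathbb{Z}^s\}$. Then $\widetilde\Lambda=(\widetilde{\mathcal{L}}\subset\mathbb{R}^s,\mathbb{R}^n)$ is also a generic cut-and-project scheme.
   Context: A lattice $\mathcal{L}\subset\mathbb{R}^s$ is $\{L\mathbf{r}:\mathbf{r}\in\mathbb{Z}^s\}$ for a non-singular $L\in\mathbb{R}^{s\times s}$ (an associated matrix). For $1\le n<s$ the scheme $(\mathcal{L}\subset\mathbb{R}^s,\mathbb{R}^n)$ has projections $\pi_\parallel(\mathbf{x})=(x_1,\dots,x_n)^\top$, $\pi_\perp(\mathbf{x})=(x_{n+1},\dots,x_s)^\top$; it is generic if $\pi_\parallel|_{\mathcal{L}}$ and $\pi_\perp|_{\mathcal{L}}$ are injective and $\pi_\perp(\mathcal{L})$ is dense in $\mathbb{R}^{s-n}$. *)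

(* Defs.v *)
From HB Require Import structures.
From mathcomp Require Import all_boot all_order all_algebra.
From mathcomp Require Import all_classical all_reals all_analysis.
Set Implicit Arguments. Unset Strict Implicit. Unset Printing Implicit Defensive.
Import Order.TTheory GRing.Theory Num.Theory.
Import numFieldNormedType.Exports.
Local Open Scope ring_scope.
Local Open Scope classical_set_scope.

(* Ambient space R^s with s = n + m, vectors are column vectors 'cV[R]_(n+m). *)

Definition latpt (R : realType) (s : nat) (L : 'M[R]_s) (r : 'cV[int]_s) : 'cV[R]_s :=
  L *m map_mx (fun z : int => z%:~R) r.

Definition lattice (R : realType) (s : nat) (L : 'M[R]_s) : set 'cV[R]_s :=
  [set latpt L r | r in [set: 'cV[int]_s]].

Definition pi_par (R : realType) (n m : nat) (x : 'cV[R]_(n + m)) : 'cV[R]_n := usubmx x.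
Definition pi_perp (R : realType) (n m : nat) (x : 'cV[R]_(n + m)) : 'cV[R]_m := dsubmx x.

Definition generic_cps (R : realType) (n m : nat) (L : 'M[R]_(n + m)) : Prop :=
  [/\ {in lattice L &, injective (@pi_par R n m)},
      {in lattice L &, injective (@pi_perp R n m)} &
      dense (@pi_perp R n m @` lattice L)].

(* Main.v *)
Require Import Defs.
From HB Require Import structures.
From mathcomp Require Import all_boot all_order all_algebra.
From mathcomp Require Import all_classical all_reals all_analysis.
Import Order.TTheory GRing.Theory Num.Theory.
Import numFieldNormedType.Exports.
Local Open Scope ring_scope.

Lemma denom_mx (k l : nat) (M : 'M[rat]_(k, l)) :
  exists d : int, 0 < d /\ exists Z : 'M[int]_(k, l),
    d%:~R *: M = map_mx (fun z : int => z%:~R) Z.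
Proof.
exists (\prod_(p : 'I_k * 'I_l) denq (M p.1 p.2)); split.
  by apply: prodr_gt0 => p _; exact: denq_gt0.
exists (\matrix_(i, j) (numq (M i j) *
          \prod_(p : 'I_k * 'I_l | p != (i, j)) denq (M p.1 p.2))).
apply/matrixP => i j; rewrite !mxE (bigD1 (i, j)) //= !rmorphM /= numqE.
by rewrite mulrC mulrA.
Qed.

Lemma cont_sum (R : realType) (m : nat) (I : eqType) (s : seq I)
  (g : I -> 'cV[R]_m -> 'cV[R]_m) :
  (forall i, continuous (g i)) -> continuous (fun y => \sum_(i <- s) g i y).
Proof.
move=> gc; elim: s => [|a s IH].
  have -> : (fun y => \sum_(i <- [::]) g i y) = fun=> 0.
    by apply/funext => y; rewrite big_nil.
  exact: cst_continuous.
have -> : (fun y => \sum_(i <- a :: s) g i y) = (g a) \+ (fun y => \sum_(i <- s) g i y).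
  by apply/funext => y; rewrite big_cons.
by move=> x; apply: continuousD; [exact: gc| exact: IH].
Qed.

Lemma mul_cont (R : realType) (m : nat) (A : 'M[R]_m) :
  continuous (fun y : 'cV[R]_m => A *m y).
Proof.
have -> : (fun y : 'cV[R]_m => A *m y) = (fun y => \sum_(j <- index_enum 'I_m) y j 0 *: col j A).
  apply/funext => y; apply/matrixP => i k; rewrite !mxE summxE.
  by apply: eq_bigr => j _; rewrite !mxE (ord1 k) mulrC.
apply: cont_sum => j x; apply: continuousZr_tmp.
exact: (@coord_continuous R m 1 j 0).
Qed.

Lemma pi_par_W (R : realType) (n m : nat) (WA : 'M[R]_n) (WB : 'M[R]_m) (x : 'cV[R]_(n + m)) :
  pi_par (block_mx WA 0 0 WB *m x) = WA *m pi_par x.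
Proof. by rewrite /pi_par -[x]vsubmxK mul_block_col !col_mxKu mul0mx addr0. Qed.

Lemma pi_perp_W (R : realType) (n m : nat) (WA : 'M[R]_n) (WB : 'M[R]_m) (x : 'cV[R]_(n + m)) :
  pi_perp (block_mx WA 0 0 WB *m x) = WB *m pi_perp x.
Proof. by rewrite /pi_perp -[x]vsubmxK mul_block_col !col_mxKd mul0mx add0r. Qed.

Lemma pi_par_Z (R : realType) (n m : nat) (a : R) (x : 'cV[R]_(n + m)) :
  pi_par (a *: x) = a *: pi_par x.
Proof. by apply/matrixP => i j; rewrite !mxE. Qed.

Lemma pi_perp_Z (R : realType) (n m : nat) (a : R) (x : 'cV[R]_(n + m)) :
  pi_perp (a *: x) = a *: pi_perp x.
Proof. by apply/matrixP => i j; rewrite !mxE. Qed.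

Theorem lemma2 (R : realType) (n m : nat) (hn : (0 < n)%N) (hm : (0 < m)%N)
  (L : 'M[R]_(n + m)) (WA : 'M[R]_n) (WB : 'M[R]_m) (Q : 'M[rat]_(n + m)) :
  L \in unitmx -> WA \in unitmx -> WB \in unitmx -> Q \in unitmx ->
  generic_cps L ->
  generic_cps (block_mx WA 0 0 WB *m L *m map_mx (fun q : rat => ratr q) (invmx Q)).
Proof.
move=> hL hWA hWB hQ [inj1 inj2 dens].
set W := block_mx WA 0 0 WB.
set P := map_mx _ (invmx Q).
have [d [d0 [Z hZ]]] := denom_mx _ _ (invmx Q).
have [e [e0 [Z' hZ']]] := denom_mx _ _ Q.
pose iR := (intr : {rmorphism int -> R}).
have dP (r : 'cV[int]_(n + m)) :
    d%:~R *: (P *m map_mx iR r) = map_mx iR (Z *m r).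
  rewrite scalemxAl.
  have -> : d%:~R *: P = map_mx iR Z.
    rewrite /P -[d%:~R](rmorph_int (@ratr R)) -map_mxZ hZ -map_mx_comp.
    by apply/matrixP => i j; rewrite !mxE /= ratr_int.
  by rewrite map_mxM.
have eP (r : 'cV[int]_(n + m)) :
    P *m map_mx iR (Z' *m r) = e%:~R *: map_mx iR r.
  rewrite map_mxM mulmxA.
  have -> : map_mx iR Z' = map_mx (@ratr R) (e%:~R *: Q).
    rewrite hZ' -map_mx_comp.
    by apply/matrixP => i j; rewrite !mxE /= ratr_int.
  rewrite /P -map_mxM -scalemxAr mulVmx // map_mxZ rmorph_int map_scalar_mx rmorph1.
  by rewrite -scalemxAl mul1mx.
have dne0 : (d%:~R : R) != 0 by rewrite intr_eq0 gt_eqF.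
have ene0 : (e%:~R : R) != 0 by rewrite intr_eq0 gt_eqF.
have latE r : latpt (W *m L *m P) r = W *m (L *m (P *m map_mx iR r)).
  by rewrite /latpt !mulmxA.
have latL r : latpt L r = L *m map_mx iR r by [].
have yE r : d%:~R *: (L *m (P *m map_mx iR r)) = latpt L (Z *m r).
  by rewrite latL -dP scalemxAr.
have memL r : (lattice L (latpt L r)) by exists r.
split.
- move=> _ _ /set_mem [r1 _ <-] /set_mem [r2 _ <-].
  rewrite !latE !pi_par_W => h.
  have h2 : pi_par (L *m (P *m map_mx iR r1)) = pi_par (L *m (P *m map_mx iR r2)).
    by rewrite -(mulKmx hWA (pi_par _)) h mulKmx.
  have h3 : latpt L (Z *m r1) = latpt L (Z *m r2).
    apply: inj1; try exact: mem_set.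
    by rewrite -!yE !pi_par_Z h2.
  by rewrite -!yE in h3; rewrite (scalerI dne0 h3).
- move=> _ _ /set_mem [r1 _ <-] /set_mem [r2 _ <-].
  rewrite !latE !pi_perp_W => h.
  have h2 : pi_perp (L *m (P *m map_mx iR r1)) = pi_perp (L *m (P *m map_mx iR r2)).
    by rewrite -(mulKmx hWB (pi_perp _)) h mulKmx.
  have h3 : latpt L (Z *m r1) = latpt L (Z *m r2).
    apply: inj2; try exact: mem_set.
    by rewrite -!yE !pi_perp_Z h2.
  by rewrite -!yE in h3; rewrite (scalerI dne0 h3).
pose f := fun y : 'cV[R]_m => e%:~R *: (WB *m y).
have fc : continuous f.
  move=> x; apply: continuousZl_tmp; exact: mul_cont.
have fE r : pi_perp (latpt (W *m L *m P) (Z' *m r)) = f (pi_perp (latpt L r)).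
  by rewrite latE eP -scalemxAr -scalemxAr pi_perp_Z pi_perp_W.
move=> U Une oO; case: Une => o Oo.
have oO' : open (f @^-1` U)%classic by move/continuousP: fc; apply.
have [z [Uz [x [r _ hx] hz]]] : (f @^-1` U `&` (@pi_perp R n m @` lattice L) !=set0)%classic.
  apply: dens => //; exists (invmx WB *m (e%:~R^-1 *: o)).
  by rewrite /f /= mulKVmx // scalerA divff // scale1r.
subst x z.
exists (f (pi_perp (latpt L r))); split => //.
by exists (latpt (W *m L *m P) (Z' *m r)); [exists (Z' *m r)|].
Qed.
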